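(* Let $\{(X_m,d_m,f_m)\}_{m\in\mathbb{N}}$ be a sequence of dynamical systems with each metric $d_m$ bounded by 1, and let $g_m:X_{m+1}\to X_m$ be uniformly continuous bonding maps with $f_m\circ g_m=g_m\circ f_{m+1}$ for all $m$. Suppose the inverse system $(g_m,X_m)$ satisfies the Mittag-Leffler Condition. (i) If every $(X_m,d_m,f_m)$ has the shadowing property, then the inverse limit dynamical system $(\varprojlim(g_m,X_m),d_\Pi,(f_m)^* )$ has the shadowing property. (ii) If every $(X_m,d_m,f_m)$ has the finite shadowing property, then $(\varprojlim(g_m,X_m),d_\Pi,(f_m)^* )$ has the finite shadowing property.
   Context: A dynamical system $(X,d,f)$ is a separable metric space with a continuous self-map. $\varprojlim(g_m,X_m)=\{(x_m)\in\prod_mX_m: x_m=g_m(x_{m+1})\ \forall m\}$ with metric $d_\Pi((x_m),(y_m))=\max_m d_m(x_m,y_m)/(m+1)$, and $(f_m)^*$ is the restriction of the product map $(x_m)\mapsto(f_m(x_m))$. The Mittag-Leffler Condition: for every $N$ there is $k>N$ with $g_N\circ\cdots\circ g_k(X_{k+1})=g_N\circ\cdots\circ g_i(X_{i+1})$ for all $i\ge k$. A $\delta$-pseudo-orbit of $f$ is a (finite or infinite) sequence $(x_n)$ with $d(f(x_n),x_{n+1})<\delta$; $x$ $\varepsilon$-shadows it if $d(f^n(x),x_n)<\varepsilon$ for all indices. Finite shadowing property: for every $\varepsilon>0$ there is $\delta>0$ such that every finite $\delta$-pseudo-orbit is $\varepsilon$-shadowed by some point; shadowing property: same for infinite pseudo-orbits.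 *)

(* Defs.v *)
From Stdlib Require Import Reals Lra.
From Coquelicot Require Import Coquelicot.
Open Scope R_scope.

Record MetricSpace := {
  carrier :> Type;
  mdist : carrier -> carrier -> R;
  dist_nonneg : forall x y, 0 <= mdist x y;
  dist_eq0 : forall x y, mdist x y = 0 <-> x = y;
  dist_sym : forall x y, mdist x y = mdist y x;
  dist_tri : forall x y z, mdist x z <= mdist x y + mdist y z
}.
Arguments mdist {m} _ _.

(* Separable: a countable dense subset (enumerated by nat, with gaps allowed
   via option so that the empty space is separable). *)
Definition separable (X : MetricSpace) : Prop :=
  exists s : nat -> option X,
    forall (x : X) (eps : R), 0 < eps ->
      exists n y, s n = Some y /\ mdist x y < eps.

Definition continuous_map {X Y : MetricSpace} (f : X -> Y) : Prop :=
  forall (x : X) (eps : R), 0 < eps -> exists delta, 0 < delta /\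
    forall x' : X, mdist x x' < delta -> mdist (f x) (f x') < eps.

Definition uniformly_continuous_map {X Y : MetricSpace} (f : X -> Y) : Prop :=
  forall eps : R, 0 < eps -> exists delta, 0 < delta /\
    forall x x' : X, mdist x x' < delta -> mdist (f x) (f x') < eps.

Definition dynamical_system (X : MetricSpace) (f : X -> X) : Prop :=
  separable X /\ continuous_map f.

(* Shadowing notions for a map F : T -> T restricted to an (F-invariant)
   subset P of T, with distance d.  For a whole space take P := fun _ => True. *)

Definition finite_pseudo_orbit {T : Type} (P : T -> Prop) (d : T -> T -> R)
  (F : T -> T) (delta : R) (x : nat -> T) (n : nat) : Prop :=
  (forall i, (i <= n)%nat -> P (x i)) /\
  (forall i, (i < n)%nat -> d (F (x i)) (x (S i)) < delta).

Definition pseudo_orbit {T : Type} (P : T -> Prop) (d : T -> T -> R)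
  (F : T -> T) (delta : R) (x : nat -> T) : Prop :=
  (forall i, P (x i)) /\ (forall i, d (F (x i)) (x (S i)) < delta).

Definition finite_shadowing_on {T : Type} (P : T -> Prop) (d : T -> T -> R)
  (F : T -> T) : Prop :=
  forall eps, 0 < eps -> exists delta, 0 < delta /\
    forall (x : nat -> T) (n : nat), finite_pseudo_orbit P d F delta x n ->
      exists z, P z /\ forall i, (i <= n)%nat -> d (Nat.iter i F z) (x i) < eps.

Definition shadowing_on {T : Type} (P : T -> Prop) (d : T -> T -> R)
  (F : T -> T) : Prop :=
  forall eps, 0 < eps -> exists delta, 0 < delta /\
    forall x : nat -> T, pseudo_orbit P d F delta x ->
      exists z, P z /\ forall i, d (Nat.iter i F z) (x i) < eps.

Definition shadowing (X : MetricSpace) (f : X -> X) : Prop :=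
  shadowing_on (fun _ => True) (@mdist X) f.

Definition finite_shadowing (X : MetricSpace) (f : X -> X) : Prop :=
  finite_shadowing_on (fun _ => True) (@mdist X) f.

Section InverseLimit.
Variable X : nat -> MetricSpace.
Variable g : forall m, X (S m) -> X m.

Definition inv_lim (x : forall m, X m) : Prop :=
  forall m, x m = g m (x (S m)).

(* d_Pi(x,y) = max_m d_m(x_m,y_m)/(m+1), written as the supremum
   (which is attained when the d_m are bounded). *)
Definition d_Pi (x y : forall m, X m) : R :=
  real (Lub_Rbar (fun r => exists m : nat, r = mdist (x m) (y m) / INR (S m))).

Definition prod_map (f : forall m, X m -> X m) (x : forall m, X m) :
  forall m, X m := fun m => f m (x m).

(* img j N y  <->  y \in g_N o ... o g_{N+j-1} (X_{N+j})   (img 0 N = X_N) *)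
Fixpoint img (j : nat) : forall N, X N -> Prop :=
  match j with
  | O => fun _ _ => True
  | S j' => fun N y => exists x : X (S N), img j' (S N) x /\ g N x = y
  end.

Definition mittag_leffler : Prop :=
  forall N, exists k, (N < k)%nat /\ forall i, (k <= i)%nat ->
    forall y : X N, img (S k - N) N y <-> img (S i - N) N y.

End InverseLimit.

(* Main.v *)
Require Import Defs.
From Stdlib Require Import Reals Lra Lia Psatz Arith ClassicalEpsilon Eqdep_dec.
From Coquelicot Require Import Coquelicot.
Open Scope R_scope.

Lemma iter_comm (X : nat -> MetricSpace) (f : forall m, X m -> X m)
  (g : forall m, X (S m) -> X m)
  (Hcomm : forall m (x : X (S m)), f m (g m x) = g m (f (S m) x)) :
  forall i m (x : X (S m)), Nat.iter i (f m) (g m x) = g m (Nat.iter i (f (S m)) x).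
Proof. induction i; intros m x; simpl; auto. rewrite IHi, Hcomm; auto. Qed.

Lemma iter_prod (X : nat -> MetricSpace) (f : forall m, X m -> X m) :
  forall i z m, Nat.iter i (prod_map X f) z m = Nat.iter i (f m) (z m).
Proof. induction i; intros z m; simpl; auto. unfold prod_map at 1. rewrite IHi; auto. Qed.

Lemma inv_lim_iter (X : nat -> MetricSpace) (f : forall m, X m -> X m)
  (g : forall m, X (S m) -> X m)
  (Hcomm : forall m (x : X (S m)), f m (g m x) = g m (f (S m) x)) :
  forall i z, inv_lim X g z -> inv_lim X g (Nat.iter i (prod_map X f) z).
Proof.
  intros i z Hz m. rewrite !iter_prod, (Hz m), iter_comm; auto.
Qed.

Lemma close_down (X : nat -> MetricSpace) (g : forall m, X (S m) -> X m)
  (Hunif : forall m, uniformly_continuous_map (g m)) :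
  forall N eps, 0 < eps -> exists delta, 0 < delta /\
    forall p q : forall m, X m, inv_lim X g p -> inv_lim X g q ->
      mdist (p N) (q N) < delta -> forall m, (m <= N)%nat -> mdist (p m) (q m) < eps.
Proof.
  induction N; intros eps He.
  - exists eps; split; auto. intros p q _ _ H m Hm.
    assert (m = 0%nat) by lia. subst; auto.
  - destruct (IHN eps He) as [d1 [Hd1 H1]].
    destruct (Hunif N d1 Hd1) as [d2 [Hd2 H2]].
    exists (Rmin eps d2); split. apply Rmin_pos; auto.
    intros p q Hp Hq H m Hm.
    destruct (Nat.eq_dec m (S N)) as [->|Hne].
    + eapply Rlt_le_trans; [exact H|apply Rmin_l].
    + apply H1 with (p := p) (q := q); auto; [|lia].
      rewrite (Hp N), (Hq N). apply H2.
      eapply Rlt_le_trans; [exact H|apply Rmin_r].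
Qed.

Lemma lift_close (X : nat -> MetricSpace) (f : forall m, X m -> X m)
  (g : forall m, X (S m) -> X m)
  (Hunif : forall m, uniformly_continuous_map (g m))
  (Hcomm : forall m (x : X (S m)), f m (g m x) = g m (f (S m) x)) :
  forall j N eps, 0 < eps -> exists delta, 0 < delta /\
    forall (Q : nat -> Prop) (xs : nat -> forall m, X m),
      (forall i, Q i -> inv_lim X g (xs i)) ->
      forall L (w : X L), L = (N + j)%nat ->
      (forall i, Q i -> mdist (Nat.iter i (f L) w) (xs i L) < delta) ->
      exists y : X N, img X g j N y /\
        forall i, Q i -> mdist (Nat.iter i (f N) y) (xs i N) < eps.
Proof.
  induction j; intros N eps He.
  - exists eps; split; auto. intros Q xs Hxs L w HL Hw.
    rewrite Nat.add_0_r in HL. subst L. exists w; split; auto. exact Logic.I.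
  - destruct (Hunif N eps He) as [d1 [Hd1 Hu]].
    destruct (IHj (S N) d1 Hd1) as [d [Hd HP]].
    exists d; split; auto. intros Q xs Hxs L w HL Hw.
    destruct (HP Q xs Hxs L w ltac:(lia) Hw) as [y' [Hy' Hc]].
    exists (g N y'). split.
    + simpl. exists y'; auto.
    + intros i Hi. rewrite iter_comm by auto. rewrite (Hxs i Hi N).
      apply Hu. apply Hc; auto.
Qed.

Lemma img_S (X : nat -> MetricSpace) (g : forall m, X (S m) -> X m) :
  forall j N y, img X g (S j) N y -> img X g j N y.
Proof.
  induction j; intros N y H. exact Logic.I.
  simpl in H |- *. destruct H as [x [Hx Hg]]. exists x; split; auto.
Qed.

Lemma img_le (X : nat -> MetricSpace) (g : forall m, X (S m) -> X m) :
  forall k j N y, img X g (k + j) N y -> img X g j N y.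
Proof. induction k; simpl; auto. intros; apply IHk, img_S; auto. Qed.

Definition stab (X : nat -> MetricSpace) (g : forall m, X (S m) -> X m) N (y : X N) :=
  forall j, img X g j N y.

Lemma ml_stab (X : nat -> MetricSpace) (g : forall m, X (S m) -> X m) :
  forall N k, (N < k)%nat ->
  (forall i, (k <= i)%nat -> forall y : X N, img X g (S k - N) N y <-> img X g (S i - N) N y) ->
  forall y, img X g (S k - N) N y -> stab X g N y.
Proof.
  intros N k Hk Hi y Hy j.
  destruct (le_lt_dec j (S k - N)).
  - apply img_le with (k := (S k - N - j)%nat).
    replace (S k - N - j + j)%nat with (S k - N)%nat by lia. auto.
  - assert (Hki : (k <= j + N - 1)%nat) by lia.
    apply (proj1 (Hi _ Hki y)) in Hy.
    replace (S (j + N - 1) - N)%nat with j in Hy by lia. auto.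
Qed.

Lemma stab_lift (X : nat -> MetricSpace) (g : forall m, X (S m) -> X m)
  (HML : mittag_leffler X g) :
  forall N y, stab X g N y -> exists x : X (S N), stab X g (S N) x /\ g N x = y.
Proof.
  intros N y H.
  destruct (HML (S N)) as [k [Hk Hi]].
  specialize (H (S (S k - S N))). simpl in H. destruct H as [x [Hx Hg]].
  exists x; split; auto. apply (ml_stab X g (S N) k Hk Hi x Hx).
Qed.

Inductive reach (X : nat -> MetricSpace) (g : forall m, X (S m) -> X m)
  (N : nat) (y : X N) : forall n, X n -> Prop :=
| reach0 : reach X g N y N y
| reachS : forall n (x : X (S n)), reach X g N y (S n) x -> reach X g N y n (g n x).

Lemma reach_le X g N y : forall n x, reach X g N y n x -> (n <= N)%nat.
Proof. intros n x H; induction H; lia. Qed.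

Lemma reach_stab X g N y : stab X g N y -> forall n x, reach X g N y n x -> stab X g n x.
Proof.
  intros Hy n x H; induction H; auto.
  intro j; destruct j; simpl. exact Logic.I. exists x; split; auto.
Qed.

Lemma reach_inv X g N y : forall n x, reach X g N y n x -> (n < N)%nat ->
  exists x', reach X g N y (S n) x' /\ g n x' = x.
Proof. intros n x H; destruct H; intros; [lia|]. exists x; auto. Qed.

Lemma reach_eq0 X g N y : forall n x, reach X g N y n x ->
  (n < N)%nat \/ existT (fun m => carrier (X m)) n x = existT _ N y.
Proof.
  intros n x H; induction H; auto.
  left. destruct IHreach as [h|h]; [lia|].
  apply (f_equal (@projT1 _ _)) in h; simpl in h; lia.
Qed.

Lemma reach_eq X g N y : forall x, reach X g N y N x -> x = y.
Proof.
  intros x H. destruct (reach_eq0 X g N y N x H) as [h|h]; [lia|].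
  exact (inj_pair2_eq_dec nat Nat.eq_dec (fun m => carrier (X m)) N x y h).
Qed.

Lemma extend (X : nat -> MetricSpace) (g : forall m, X (S m) -> X m)
  (HML : mittag_leffler X g) :
  forall N y, stab X g N y -> exists z, inv_lim X g z /\ z N = y.
Proof.
  intros N y Hy.
  set (Q := fun n (x : X n) => reach X g N y n x \/ ((N < n)%nat /\ stab X g n x)).
  assert (Hstep : forall n x, Q n x -> exists x' : X (S n), Q (S n) x' /\ g n x' = x).
  { intros n x [H|[H1 H2]].
    - destruct (le_lt_dec N n).
      + pose proof (reach_le _ _ _ _ _ _ H).
        destruct (stab_lift X g HML n x (reach_stab X g N y Hy n x H)) as [x' [H1 H2]].
        exists x'; split; auto. right; split; auto. lia.
      + destruct (reach_inv _ _ _ _ _ _ H l) as [x' [H1 H2]].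
        exists x'; split; auto. left; auto.
    - destruct (stab_lift X g HML n x H2) as [x' [H3 H4]].
      exists x'; split; auto. right; split; auto. }
  assert (Hstart : exists x0 : X 0%nat, Q 0%nat x0).
  { assert (forall d n, (n + d = N)%nat -> exists x : X n, reach X g N y n x).
    { induction d; intros n Hn.
      - rewrite Nat.add_0_r in Hn. subst n. exists y; constructor.
      - destruct (IHd (S n) ltac:(lia)) as [x Hx]. exists (g n x). constructor; auto. }
    destruct (H N 0%nat) as [x Hx]; auto. exists x; left; auto. }
  pose (c0 := constructive_indefinite_description _ Hstart).
  pose (st := fun n (p : {x : X n | Q n x}) =>
          constructive_indefinite_description _ (Hstep n (proj1_sig p) (proj2_sig p))).
  pose (c := nat_rect (fun n : nat => {x : X n | Q n x}) c0
     (fun n p => exist (fun x => Q (S n) x) (proj1_sig (st n p)) (proj1 (proj2_sig (st n p))))).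
  exists (fun n => proj1_sig (c n)). split.
  - intro m. exact (eq_sym (proj2 (proj2_sig (st m (c m))))).
  - destruct (proj2_sig (c N)) as [H|[H _]]; [|lia].
    apply (reach_eq X g N y); auto.
Qed.

Lemma dPi_spec (X : nat -> MetricSpace) (Hbound : forall m (x y : X m), mdist x y <= 1) :
  forall x y, (forall m, mdist (x m) (y m) / INR (S m) <= d_Pi X x y) /\
    (forall c, (forall m, mdist (x m) (y m) / INR (S m) <= c) -> d_Pi X x y <= c).
Proof.
  intros x y. unfold d_Pi.
  set (E := fun r => exists m : nat, r = mdist (x m) (y m) / INR (S m)).
  destruct (Lub_Rbar_correct E) as [Hub Hl].
  assert (Hle1 : forall m, mdist (x m) (y m) / INR (S m) <= 1).
  { intro m. pose proof (Hbound m (x m) (y m)). pose proof (dist_nonneg _ (x m) (y m)).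
    assert (1 <= INR (S m)) by (rewrite S_INR; pose proof (pos_INR m); lra).
    set (d := mdist (x m) (y m)) in *. set (k := INR (S m)) in *.
    assert (d / k * k = d) by (field; lra). nra. }
  destruct (Lub_Rbar E) as [r| |] eqn:HE; simpl.
  - split.
    + intro m. exact (Hub _ (ex_intro _ m eq_refl)).
    + intros c Hc. apply (Hl (Finite c)). intros r0 [m ->]. simpl. auto.
  - exfalso. apply (Hl (Finite 1)). intros r0 [m ->]. simpl. auto.
  - exfalso. apply (Hub _ (ex_intro _ 0%nat eq_refl)).
Qed.

Lemma real_aux d k e : 0 <= d <= 1 -> 0 < e -> 2 / e < k -> d / k <= e / 2.
Proof.
  intros Hd He Hk.
  assert (0 < k) by (assert (0 < 2 / e) by (apply Rdiv_lt_0_compat; lra); lra).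
  assert (e * k > 2).
  { apply Rmult_lt_compat_l with (r := e) in Hk; auto.
    replace (e * (2 / e)) with 2 in Hk by (field; lra). lra. }
  apply Rmult_le_reg_r with k; auto.
  replace (d / k * k) with d by (field; lra). nra.
Qed.

Lemma core (X : nat -> MetricSpace) (f : forall m, X m -> X m)
  (g : forall m, X (S m) -> X m)
  (Hbound : forall m (x y : X m), mdist x y <= 1)
  (Hunif : forall m, uniformly_continuous_map (g m))
  (Hcomm : forall m (x : X (S m)), f m (g m x) = g m (f (S m) x))
  (HML : mittag_leffler X g) :
  forall eps, 0 < eps -> exists L theta, 0 < theta /\
    forall (Q : nat -> Prop) (xs : nat -> forall m, X m),
      (forall i, Q i -> inv_lim X g (xs i)) ->
      forall w : X L, (forall i, Q i -> mdist (Nat.iter i (f L) w) (xs i L) < theta) ->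
      exists z, inv_lim X g z /\
        forall i, Q i -> d_Pi X (Nat.iter i (prod_map X f) z) (xs i) < eps.
Proof.
  intros eps He.
  destruct (INR_unbounded (2 / eps)) as [N HN].
  destruct (close_down X g Hunif N (eps / 2) ltac:(lra)) as [dc [Hdc HC]].
  destruct (HML N) as [k [Hk Hi]].
  destruct (lift_close X f g Hunif Hcomm (S k - N) N dc Hdc) as [theta [Ht HP]].
  exists (N + (S k - N))%nat, theta. split; auto.
  intros Q xs Hxs w Hw.
  destruct (HP Q xs Hxs _ w eq_refl Hw) as [y [Hy Hc]].
  pose proof (ml_stab X g N k Hk Hi y Hy) as Hs.
  destruct (extend X g HML N y Hs) as [z [Hz HzN]].
  exists z; split; auto.
  intros i Hqi. apply Rle_lt_trans with (eps / 2); [|lra].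
  apply (proj2 (dPi_spec X Hbound _ _)). intro m.
  pose proof (dist_nonneg _ (Nat.iter i (prod_map X f) z m) (xs i m)).
  pose proof (Hbound m (Nat.iter i (prod_map X f) z m) (xs i m)).
  destruct (le_lt_dec m N).
  - assert (Hd : mdist (Nat.iter i (prod_map X f) z m) (xs i m) < eps / 2).
    { apply HC; auto. apply inv_lim_iter; auto.
      rewrite iter_prod, HzN. apply Hc; auto. }
    assert (1 <= INR (S m)) by (rewrite S_INR; pose proof (pos_INR m); lra).
    set (d := mdist (Nat.iter i (prod_map X f) z m) (xs i m)) in *. set (kk := INR (S m)) in *.
    assert (d / kk * kk = d) by (field; lra). nra.
  - apply real_aux; [split; auto | lra |].
    apply Rlt_le_trans with (INR N); auto. apply le_INR; lia.
Qed.

Theorem theorem4p7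
  (X : nat -> MetricSpace)
  (f : forall m, X m -> X m)
  (g : forall m, X (S m) -> X m)
  (Hdyn : forall m, dynamical_system (X m) (f m))
  (Hbound : forall m (x y : X m), mdist x y <= 1)
  (Hunif : forall m, uniformly_continuous_map (g m))
  (Hcomm : forall m (x : X (S m)), f m (g m x) = g m (f (S m) x))
  (HML : mittag_leffler X g) :
  ((forall m, shadowing (X m) (f m)) ->
     shadowing_on (inv_lim X g) (d_Pi X) (prod_map X f)) /\
  ((forall m, finite_shadowing (X m) (f m)) ->
     finite_shadowing_on (inv_lim X g) (d_Pi X) (prod_map X f)).
Proof.
  assert (Hstep : forall (xs : nat -> forall m, X m) L delta i,
    d_Pi X (prod_map X f (xs i)) (xs (S i)) < delta / INR (S L) ->
    mdist (f L (xs i L)) (xs (S i) L) < delta).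
  { intros xs L delta i H.
    pose proof (proj1 (dPi_spec X Hbound (prod_map X f (xs i)) (xs (S i))) L) as H1.
    unfold prod_map at 1 in H1.
    assert (0 < INR (S L)) by (rewrite S_INR; pose proof (pos_INR L); lra).
    assert (mdist (f L (xs i L)) (xs (S i) L) / INR (S L) < delta / INR (S L)) by lra.
    apply Rmult_lt_reg_r with (/ INR (S L)). apply Rinv_0_lt_compat; auto.
    exact H2. }
  split.
  - intros Hsh eps He.
    destruct (core X f g Hbound Hunif Hcomm HML eps He) as [L [theta [Ht HC]]].
    destruct (Hsh L theta Ht) as [dL [HdL HL]].
    assert (0 < INR (S L)) by (rewrite S_INR; pose proof (pos_INR L); lra).
    exists (dL / INR (S L)). split. apply Rdiv_lt_0_compat; auto.
    intros xs [Hin Hps].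
    destruct (HL (fun i => xs i L)) as [w [_ Hw]].
    { split; auto. }
    destruct (HC (fun _ => True) xs (fun i _ => Hin i) w (fun i _ => Hw i)) as [z [Hz Hz2]].
    exists z; split; auto.
  - intros Hsh eps He.
    destruct (core X f g Hbound Hunif Hcomm HML eps He) as [L [theta [Ht HC]]].
    destruct (Hsh L theta Ht) as [dL [HdL HL]].
    assert (0 < INR (S L)) by (rewrite S_INR; pose proof (pos_INR L); lra).
    exists (dL / INR (S L)). split. apply Rdiv_lt_0_compat; auto.
    intros xs n [Hin Hps].
    destruct (HL (fun i => xs i L) n) as [w [_ Hw]].
    { split; auto. }
    destruct (HC (fun i => (i <= n)%nat) xs Hin w Hw) as [z [Hz Hz2]].
    exists z; split; auto.
Qed.
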